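(* Let $p\ge1$, let $\mathcal{R}\subseteq\mathbb{R}$, and let $T:\mathbb{R}^M\times\cdots\times\mathbb{R}^M\to\mathbb{R}^D$ ($N$ factors) be a real $N$-linear map, $T(a^{(1)},\dots,a^{(N)})_i=\sum_sT_{i,s}\prod_ka^{(k)}_{s_k}$, which is a contraction on $\mathcal{R}^M\times\cdots\times\mathcal{R}^M$ with respect to the $p$-norm: $\|T(a^{(1)},\dots,a^{(N)})\|_p\le\prod_k\|a^{(k)}\|_p$ for all $a^{(k)}\in\mathcal{R}^M$. Then every local hidden variable model whose values lie in $\mathcal{R}$ satisfies $$\Big\|\big\langle T(A^{(1)},\dots,A^{(N)})\big\rangle\Big\|_p^p\le\Big\langle\prod_{k=1}^N\|A^{(k)}\|_p^p\Big\rangle,$$ whenever the right-hand side is finite.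
   Context: $\|a\|_p=(\sum_j|a_j|^p)^{1/p}$. A local hidden variable model is a probability space $(\Lambda,\mu)$ with measurable functions $A^{(k)}_j:\Lambda\to\mathcal{R}$ ($k=1,\dots,N$ site, $j=1,\dots,M$ observable); $A^{(k)}=(A^{(k)}_1,\dots,A^{(k)}_M)$ and $\langle\cdot\rangle$ is expectation w.r.t. $\mu$, taken componentwise for vectors. *)

(* Defs.v *)
From HB Require Import structures.
From mathcomp Require Import all_boot all_order all_algebra.
From mathcomp Require Import all_classical all_reals all_analysis.
Set Implicit Arguments. Unset Strict Implicit. Unset Printing Implicit Defensive.
Import Order.TTheory GRing.Theory Num.Theory.
Local Open Scope ring_scope.

Definition pnorm (R : realType) (n : nat) (p : R) (v : 'I_n -> R) : R :=
  (\sum_(j < n) `|v j| `^ p) `^ p^-1.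

Definition multilin (R : realType) (N M D : nat)
  (T : 'I_D -> {ffun 'I_N -> 'I_M} -> R) (a : 'I_N -> 'I_M -> R) : 'I_D -> R :=
  fun i => \sum_(s : {ffun 'I_N -> 'I_M}) T i s * \prod_(k < N) a k (s k).

(* Main.v *)
Require Import Defs.
From HB Require Import structures.
From mathcomp Require Import all_boot all_order all_algebra.
From mathcomp Require Import all_classical all_reals all_analysis.
From mathcomp Require Import measurable_realfun.
Import Order.TTheory GRing.Theory Num.Theory.
Local Open Scope ring_scope.
Local Open Scope classical_set_scope.

Lemma jensen_abs (R : realType) (d : measure_display) (Lam : measurableType d)
  (mu : probability Lam R) (f : Lam -> R) (p : R) :
  measurable_fun setT f -> 1 <= p ->
  ((`|Rintegral mu setT f| `^ p)%:E <= \int[mu]_x ((`|f x| `^ p)%:E))%E.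
Proof.
move=> mf p1.
have p0 : 0 < p by apply: lt_le_trans p1.
set I := (\int[mu]_x _)%E.
have I0 : (0 <= I)%E by apply: integral_ge0 => x _; rewrite lee_fin powR_ge0.
have [Ioo|Ioo] := eqVneq I +oo%E; first by rewrite Ioo leey.
have Ifin : I \is a fin_num by rewrite ge0_fin_numE // ltey.
have H1 : (\int[mu]_x (`|f x|)%:E <= ((fine I) `^ p^-1)%:E)%E.
  have [p1e|pn1] := eqVneq p 1.
    rewrite p1e invr1 powRr1 ?fine_ge0 // fineK //.
    rewrite /I le_eqVlt; apply/orP; left; apply/eqP; apply: eq_integral => x _; rewrite p1e powRr1 //.
  have p1' : 1 < p by rewrite lt_neqAle eq_sym pn1.
  pose q := p / (p - 1).
  have q0 : 0 < q by rewrite divr_gt0 // subr_gt0.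
  have pq : p^-1 + q^-1 = 1.
    rewrite /q invf_div mulrBl divff ?gt_eqF // mul1r addrC subrK //.
  have := hoelder mu mf (measurable_cst (1:R)) p0 q0 pq.
  rewrite Lnorm1.
  rewrite (@eq_Lnorm _ _ _ mu q%:E (EFin \o cst (1:R)) (cst 1%E)) // Lnorm_cst1.
  have -> : (mu [set: Lam] `^ q^-1 = 1)%E.
    have mu1 : (mu [set: Lam] = 1)%E by apply: probability_setT.
    by rewrite mu1 poweR1r.
  rewrite mule1.
  rewrite unlock /=.
  under eq_integral do rewrite mulr1.
  rewrite -/I => H; apply: (le_trans H); rewrite -poweR_EFin fineK //.
have fI : mu.-integrable setT (EFin \o f).
  apply/integrableP; split; first exact/measurable_EFinP.
  by apply: le_lt_trans H1 _; rewrite ltry.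
rewrite -[I]fineK // lee_fin.
have H2 : Rintegral mu setT (fun t => `|f t|) <= fine I `^ p^-1.
  rewrite /Rintegral -lee_fin fineK //.
  rewrite ge0_fin_numE; first by apply: le_lt_trans H1 _; rewrite ltry.
  by apply: integral_ge0 => x _; rewrite lee_fin.
have Hn := le_normr_Rintegral measurableT fI.
have H3 := le_trans Hn H2.
have pn0 : p != 0 by rewrite gt_eqF.
rewrite -[leRHS](@powRr1 _ (fine I)) ?fine_ge0 //.
rewrite -[in leRHS](mulVf pn0) powRrM.
apply: ge0_ler_powR; rewrite ?nnegrE ?powR_ge0 //; exact: ltW.
Qed.


Lemma powR_prod (R : realType) (p : R) (N : nat) (x : 'I_N -> R) :
  (forall k, 0 <= x k) ->
  (\prod_(k < N) x k) `^ p = \prod_(k < N) (x k `^ p).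
Proof.
move=> x0.
pose K (a b : R) := 0 <= a /\ a `^ p = b.
suff [] : K (\prod_(k < N) x k) (\prod_(k < N) (x k `^ p)) by [].
apply: (big_rec2 K); first by split; rewrite ?powR1.
move=> i a b _ [a0 ab]; split; first by rewrite mulr_ge0.
by rewrite powRM // ab.
Qed.

Lemma pnorm_powR (R : realType) (p : R) (n : nat) (v : 'I_n -> R) :
  0 < p -> pnorm p v `^ p = \sum_(j < n) `|v j| `^ p.
Proof.
move=> p0; rewrite /pnorm -powRrM mulVf ?gt_eqF // powRr1 //.
by apply: sumr_ge0 => j _; rewrite powR_ge0.
Qed.

Theorem proposition8 (R : realType) (p : R) (N M D : nat)
  (Rs : set R) (T : 'I_D -> {ffun 'I_N -> 'I_M} -> R)
  (d : measure_display) (Lam : measurableType d) (mu : probability Lam R)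
  (A : 'I_N -> 'I_M -> Lam -> R) :
  1 <= p ->
  (forall a : 'I_N -> 'I_M -> R, (forall k j, Rs (a k j)) ->
     pnorm p (multilin T a) <= \prod_(k < N) pnorm p (a k)) ->
  (forall k j, measurable_fun setT (A k j)) ->
  (forall k j x, Rs (A k j x)) ->
  (\int[mu]_x ((\prod_(k < N) pnorm p (fun j => A k j x) `^ p)%:E) < +oo)%E ->
  ((pnorm p (fun i => Rintegral mu setT (fun x => multilin T (fun k j => A k j x) i))
     `^ p)%:E
   <= \int[mu]_x ((\prod_(k < N) pnorm p (fun j => A k j x) `^ p)%:E))%E.
Proof.
move=> p1 hT mA RA _.
have p0 : 0 < p by apply: lt_le_trans p1.
set F := fun i x => multilin T (fun k j => A k j x) i.
have mF : forall i, measurable_fun setT (F i).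
  move=> i; rewrite /F /multilin.
  apply: measurable_sum => s; apply: measurable_funM => //.
  exact: (@measurable_prod _ _ _ setT _ (index_enum 'I_N) (fun k x => A k (s k) x)).
have mabs : forall g : Lam -> R, measurable_fun setT g ->
    measurable_fun setT (fun x => `|g x| `^ p).
  move=> g mg.
  exact: (measurableT_comp (measurable_powR p) (measurableT_comp (@normr_measurable _ _) mg)).
have mpn : forall k, measurable_fun setT (fun x => pnorm p (fun j => A k j x)).
  move=> k; rewrite /pnorm.
  apply: (measurableT_comp (measurable_powR _)).
  by apply: measurable_sum => j; apply: mabs.
rewrite pnorm_powR // -sumEFin.
apply: (@le_trans _ _ (\sum_(i < D) \int[mu]_x ((`|F i x| `^ p)%:E))%E).
  by apply: lee_sum => i _; exact: (@jensen_abs _ _ _ mu _ _ (mF i) p1).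
rewrite -ge0_integral_sum //; last by move=> i; apply/measurable_EFinP; apply: mabs.
apply: ge0_le_integral => //.
- by move=> x _; apply: sume_ge0 => i _; rewrite lee_fin powR_ge0.
- by apply: emeasurable_sum => i; apply/measurable_EFinP; apply: mabs.
- apply/measurable_EFinP.
  exact: (@measurable_prod _ _ _ setT _ (index_enum 'I_N) (fun k x => pnorm p (fun j => A k j x) `^ p) (fun k _ => measurableT_comp (measurable_powR p) (mpn k))).
move=> x _; rewrite sumEFin lee_fin.
rewrite -pnorm_powR // -powR_prod; last by move=> k; rewrite /pnorm powR_ge0.
apply: ge0_ler_powR; [exact: ltW| rewrite nnegrE | rewrite nnegrE |].
- by rewrite /pnorm powR_ge0.
- by apply: prodr_ge0 => k _; rewrite /pnorm powR_ge0.
exact: hT.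
Qed.
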